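(* Let $a,\varepsilon\in\mathbb{R}$ with $\frac{|a|}{\sqrt2}<\varepsilon<|a|$ or $-|a|<\varepsilon<-\frac{|a|}{\sqrt2}$. Let $X_-(x,y,z)=(y,\,-ay+x+az+\varepsilon,\,x)$, $X_+(x,y,z)=(y,\,-ay-x-az+\varepsilon,\,x)$, $P=\left(-\frac{\sqrt{a^2-\varepsilon^2}}{a},\frac{\varepsilon}{a},0\right)$, and let $x_{\alpha_\pm}(t)$ be the solution of $\dot{\mathbf x}=X_\pm(\mathbf x)$ with $x_{\alpha_\pm}(0)=P$. Set $$t_-=\ln\left(\frac{\sqrt{a^2-\varepsilon^2}+\varepsilon}{\varepsilon-\sqrt{a^2-\varepsilon^2}}\right),\qquad t_+=2\arctan\left(\frac{\sqrt{a^2-\varepsilon^2}}{\varepsilon}\right).$$ Then $\|x_{\alpha_-}(t)\|^2<1$ for $0<t<t_-$ and $\|x_{\alpha_+}(t)\|^2>1$ for $0<t<t_+$.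
   Context: $\|\cdot\|$ is the Euclidean norm on $\mathbb{R}^3$. *)

(* Defs.v *)
From Stdlib Require Import Reals.
From Coquelicot Require Import Coquelicot.
Open Scope R_scope.

Definition R3 : Type := (R * R * R)%type.

Definition Xminus (a eps : R) (p : R3) : R3 :=
  let '(x, y, z) := p in (y, - a * y + x + a * z + eps, x).

Definition Xplus (a eps : R) (p : R3) : R3 :=
  let '(x, y, z) := p in (y, - a * y - x - a * z + eps, x).

Definition sqnorm3 (p : R3) : R :=
  let '(x, y, z) := p in x ^ 2 + y ^ 2 + z ^ 2.

Definition c1 (p : R3) : R := fst (fst p).
Definition c2 (p : R3) : R := snd (fst p).
Definition c3 (p : R3) : R := snd p.

Definition is_solution (X : R3 -> R3) (p0 : R3) (u : R -> R3) : Prop :=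
  u 0 = p0 /\
  forall t : R,
    is_derive (fun s => c1 (u s)) t (c1 (X (u t))) /\
    is_derive (fun s => c2 (u s)) t (c2 (X (u t))) /\
    is_derive (fun s => c3 (u s)) t (c3 (X (u t))).

Definition Ppt (a eps : R) : R3 :=
  (- sqrt (a ^ 2 - eps ^ 2) / a, eps / a, 0).

Definition tminus (a eps : R) : R :=
  ln ((sqrt (a ^ 2 - eps ^ 2) + eps) / (eps - sqrt (a ^ 2 - eps ^ 2))).

Definition tplus (a eps : R) : R :=
  2 * atan (sqrt (a ^ 2 - eps ^ 2) / eps).

(* Main.v *)
Require Import Defs.
From Stdlib Require Import Reals Lra Psatz.
From Coquelicot Require Import Coquelicot.
Open Scope R_scope.

Lemma const0 (g : R -> R) : (forall t, is_derive g t 0) -> forall t, g t = g 0.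
Proof.
  intros H t.
  destruct (MVT_cor4 g (fun _ => 0) 0 (Rabs t) (fun c _ => H c) t) as [c [Hc _]].
  - rewrite Rminus_0_r; apply Rle_refl.
  - lra.
Qed.

Ltac fixD f H t :=
  rewrite (is_derive_unique (fun x0 : R => f x0) t _ (H t)).

Ltac exd := repeat split; eexists; eauto.

Lemma lin_ode (f : R -> R) (k : R) :
  (forall t, is_derive f t (k * f t)) -> f 0 = 0 -> forall t, f t = 0.
Proof.
  intros H H0 t.
  assert (Hg : forall t, is_derive (fun s => f s * exp (- (k * s))) t 0).
  { intro s. auto_derive.
    - exd.
    - fixD f H s. ring. }
  pose proof (const0 _ Hg t) as E. simpl in E.
  rewrite H0 in E. rewrite Rmult_0_l in E.
  pose proof (exp_pos (- (k * t))).
  nra.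
Qed.

Lemma minus_case (a eps s : R) (x y z : R -> R) :
  a <> 0 -> 0 < s -> s ^ 2 = a ^ 2 - eps ^ 2 ->
  (forall t, is_derive x t (y t)) ->
  (forall t, is_derive y t (- a * y t + x t + a * z t + eps)) ->
  (forall t, is_derive z t (x t)) ->
  x 0 = - s / a -> y 0 = eps / a -> z 0 = 0 ->
  forall t, 0 < t < ln ((s + eps) / (eps - s)) ->
  x t ^ 2 + y t ^ 2 + z t ^ 2 < 1.
Proof.
  intros Ha Hs Hs2 Hx Hy Hz x0 y0 z0.
  assert (Hw : forall t, y t - z t - eps / a = 0).
  { apply (lin_ode (fun t => y t - z t - eps / a) (- a)).
    - intro t. auto_derive. exd. fixD y Hy t. fixD z Hz t. field. exact Ha.
    - rewrite y0, z0. ring. }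
  assert (Hp : forall t, (x t + y t) * exp (- t) = x 0 + y 0).
  { intro t0. rewrite <- (Rmult_1_r (x 0 + y 0)). rewrite <- exp_0.
    replace 0 with (- 0) at 3 by ring.
    apply (const0 (fun t => (x t + y t) * exp (- t))).
    intro t. auto_derive. exd. fixD y Hy t. fixD x Hx t.
    pose proof (Hw t). replace (z t) with (y t - eps / a) by lra. field. exact Ha. }
  assert (Hq : forall t, (x t - y t) * exp t = x 0 - y 0).
  { intro t0. rewrite <- (Rmult_1_r (x 0 - y 0)). rewrite <- exp_0.
    apply (const0 (fun t => (x t - y t) * exp t)).
    intro t. auto_derive. exd. fixD y Hy t. fixD x Hx t.
    pose proof (Hw t). replace (z t) with (y t - eps / a) by lra. field. exact Ha. }
  intros t [Ht1 Ht2].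
  assert (Hr : 0 < (s + eps) / (eps - s)).
  { destruct (Rlt_dec 0 ((s + eps) / (eps - s))) as [h|h]; auto.
    unfold ln in Ht2. destruct (Rlt_dec 0 ((s + eps) / (eps - s))); [contradiction|lra]. }
  assert (Hu : exp t < (s + eps) / (eps - s)).
  { rewrite <- (exp_ln _ Hr). apply exp_increasing. exact Ht2. }
  assert (Hu1 : 1 < exp t) by (rewrite <- exp_0; apply exp_increasing; lra).
  assert (Hr1 : 1 < (s + eps) / (eps - s)) by lra.
  assert (Heps : s < eps).
  { destruct (Rlt_dec s eps) as [h|h]; auto. exfalso.
    destruct (Req_dec eps s) as [e|e].
    - subst. unfold Rdiv in Hr1. rewrite Rminus_diag, Rinv_0 in Hr1. lra.
    - assert (eps - s < 0) by lra.
      assert (s + eps < eps - s).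
      { apply (Rmult_lt_reg_r (/ (s - eps))). apply Rinv_0_lt_compat; lra.
        replace ((eps - s) * / (s - eps)) with (-1) by (field; lra).
        replace ((s + eps) * / (s - eps)) with (- ((s + eps) / (eps - s))) by (field; lra).
        lra. }
      lra. }
  set (u := exp t) in *.
  assert (Hup : (eps - s) * u < s + eps).
  { apply (Rmult_lt_reg_r (/ (eps - s))). apply Rinv_0_lt_compat; lra.
    replace ((eps - s) * u * / (eps - s)) with u by (field; lra). exact Hu. }
  assert (Hu0 : 0 < u) by lra.
  pose proof (Hp t) as P. pose proof (Hq t) as Q. pose proof (Hw t) as W.
  rewrite exp_Ropp in P. fold u in P.
  rewrite x0, y0 in P, Q.
  fold u in Q.
  assert (E1 : x t + y t = (-s/a + eps/a) * u) by (rewrite <- P; field; lra).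
  assert (E2 : x t - y t = (-s/a - eps/a) / u) by (rewrite <- Q; field; lra).
  assert (X : x t = ((-s/a + eps/a) * u + (-s/a - eps/a) / u) / 2) by lra.
  assert (Y : y t = ((-s/a + eps/a) * u - (-s/a - eps/a) / u) / 2) by lra.
  assert (Z : z t = y t - eps / a) by lra.
  rewrite Z, X, Y.
  set (al := eps - s). set (be := eps + s).
  assert (Ha2 : a ^ 2 = (al ^ 2 + be ^ 2) / 2) by (unfold al, be; nra).
  assert (K : 1 - (((-s/a + eps/a) * u + (-s/a - eps/a) / u) / 2) ^ 2 - (((-s/a + eps/a) * u - (-s/a - eps/a) / u) / 2) ^ 2
     - (((-s/a + eps/a) * u - (-s/a - eps/a) / u) / 2 - eps / a) ^ 2
     = - ((u - 1) * (al * u - be) * (2 * (u + 1) * (al * u + be) + (u - 1) * (al * u - be))) / (4 * u ^ 2 * a ^ 2)).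
  { replace 1 with (a ^ 2 / a ^ 2) at 1 by (field; exact Ha). rewrite Ha2 at 1. unfold al, be. field. split; lra. }
  assert (0 < (u - 1) * (be - al * u) * (2 * (u + 1) * (al * u + be) + (u - 1) * (al * u - be))).
  { apply Rmult_lt_0_compat. apply Rmult_lt_0_compat; unfold al, be in *; lra.
    unfold al, be in *; nra. }
  assert (0 < 4 * u ^ 2 * a ^ 2).
  { assert (0 < a ^ 2) by (pose proof (pow2_ge_0 a); assert (a ^ 2 <> 0) by (apply pow_nonzero; exact Ha); lra).
    assert (0 < u ^ 2) by (apply pow_lt; lra).
    apply Rmult_lt_0_compat; [apply Rmult_lt_0_compat|]; lra. }
  assert (0 < - ((u - 1) * (al * u - be) * (2 * (u + 1) * (al * u + be) + (u - 1) * (al * u - be))) / (4 * u ^ 2 * a ^ 2)).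
  { apply Rdiv_lt_0_compat; [|assumption]. replace (al * u - be) with (- (be - al * u)) by ring. nra. }
  lra.
Qed.

Lemma plus_case (a eps s : R) (x y z : R -> R) :
  a <> 0 -> 0 < s -> s ^ 2 = a ^ 2 - eps ^ 2 ->
  (forall t, is_derive x t (y t)) ->
  (forall t, is_derive y t (- a * y t - x t - a * z t + eps)) ->
  (forall t, is_derive z t (x t)) ->
  x 0 = - s / a -> y 0 = eps / a -> z 0 = 0 ->
  forall t, 0 < t < 2 * atan (s / eps) ->
  x t ^ 2 + y t ^ 2 + z t ^ 2 > 1.
Proof.
  intros Ha Hs Hs2 Hx Hy Hz x0 y0 z0.
  assert (Hw : forall t, y t + z t - eps / a = 0).
  { apply (lin_ode (fun t => y t + z t - eps / a) (- a)).
    - intro t. auto_derive. exd. fixD y Hy t. fixD z Hz t. field. exact Ha.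
    - rewrite y0, z0. field. exact Ha. }
  assert (Hc : forall t, x t * cos t - y t * sin t = x 0).
  { intro t0. replace (x 0) with (x 0 * cos 0 - y 0 * sin 0) by (rewrite cos_0, sin_0; ring).
    apply (const0 (fun t => x t * cos t - y t * sin t)).
    intro t. auto_derive. exd. fixD y Hy t. fixD x Hx t.
    pose proof (Hw t). replace (z t) with (eps / a - y t) by lra. field. exact Ha. }
  assert (Hd : forall t, x t * sin t + y t * cos t = y 0).
  { intro t0. replace (y 0) with (x 0 * sin 0 + y 0 * cos 0) by (rewrite cos_0, sin_0; ring).
    apply (const0 (fun t => x t * sin t + y t * cos t)).
    intro t. auto_derive. exd. fixD y Hy t. fixD x Hx t.
    pose proof (Hw t). replace (z t) with (eps / a - y t) by lra. field. exact Ha. }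
  intros t [Ht1 Ht2].
  assert (Heps : 0 < eps).
  { destruct (Rlt_dec 0 eps) as [h|h]; auto. exfalso.
    destruct (Req_dec eps 0) as [e|e].
    - subst. unfold Rdiv in Ht2. rewrite Rinv_0, Rmult_0_r, atan_0 in Ht2. lra.
    - assert (s / eps < 0).
      { unfold Rdiv. apply Rmult_pos_neg; [lra|]. apply Rinv_lt_0_compat; lra. }
      pose proof (atan_increasing _ _ H). rewrite atan_0 in H0. lra. }
  pose proof (Hc t) as C. pose proof (Hd t) as D. pose proof (Hw t) as W.
  pose proof (sin2_cos2 t) as SC. unfold Rsqr in SC.
  assert (Y : y t = - x 0 * sin t + y 0 * cos t).
  { rewrite <- C, <- D. transitivity (y t * (sin t * sin t + cos t * cos t)); [rewrite SC; ring | ring]. }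
  assert (XY : x t ^ 2 + y t ^ 2 = x 0 ^ 2 + y 0 ^ 2).
  { rewrite <- C, <- D. transitivity ((x t ^ 2 + y t ^ 2) * (sin t * sin t + cos t * cos t)); [rewrite SC; ring | ring]. }
  assert (N1 : x 0 ^ 2 + y 0 ^ 2 = 1).
  { rewrite x0, y0. replace ((- s / a) ^ 2 + (eps / a) ^ 2) with ((s ^ 2 + eps ^ 2) / a ^ 2) by (field; exact Ha).
    rewrite Hs2. field. exact Ha. }
  assert (Z : z t = eps / a - y t) by lra.
  set (h := t / 2).
  assert (Ht : t = 2 * h) by (unfold h; field).
  assert (Hh : 0 < h < atan (s / eps)) by (unfold h; lra).
  pose proof (atan_bound (s / eps)).
  assert (PI2 : 0 < PI / 2) by (pose proof PI_RGT_0; lra).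
  assert (Sh : 0 < sin h) by (apply sin_gt_0; lra).
  assert (Ch : 0 < cos h) by (apply cos_gt_0; lra).
  assert (Th : tan h < s / eps).
  { apply Rlt_le_trans with (tan (atan (s / eps))); [|rewrite tan_atan; lra]. apply tan_increasing; lra. }
  unfold tan in Th.
  assert (K : eps * sin h < s * cos h).
  { apply (Rmult_lt_compat_r (eps * cos h)) in Th; [|nra].
    replace (sin h / cos h * (eps * cos h)) with (eps * sin h) in Th by (field; lra).
    replace (s / eps * (eps * cos h)) with (s * cos h) in Th by (field; lra). exact Th. }
  assert (E : eps / a - y t = 2 * sin h * (eps * sin h - s * cos h) / a).
  { rewrite Y, x0, y0, Ht, sin_2a, cos_2a_sin. field. exact Ha. }
  assert (NZ : eps / a - y t <> 0).
  { rewrite E. unfold Rdiv. apply Rmult_integral_contrapositive_currified.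
    - apply Rmult_integral_contrapositive_currified; [lra|]. lra.
    - apply Rinv_neq_0_compat; exact Ha. }
  rewrite Z, XY, N1.
  assert (0 < (eps / a - y t) ^ 2) by (pose proof (Rsqr_pos_lt _ NZ); unfold Rsqr in *; lra).
  lra.
Qed.

Lemma Xm_comp a eps (p : R3) :
  Defs.c1 (Xminus a eps p) = Defs.c2 p /\ Defs.c2 (Xminus a eps p) = - a * Defs.c2 p + Defs.c1 p + a * Defs.c3 p + eps /\
  Defs.c3 (Xminus a eps p) = Defs.c1 p.
Proof. destruct p as [[p1 p2] p3]; simpl; auto. Qed.

Lemma Xp_comp a eps (p : R3) :
  Defs.c1 (Xplus a eps p) = Defs.c2 p /\ Defs.c2 (Xplus a eps p) = - a * Defs.c2 p - Defs.c1 p - a * Defs.c3 p + eps /\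
  Defs.c3 (Xplus a eps p) = Defs.c1 p.
Proof. destruct p as [[p1 p2] p3]; simpl; auto. Qed.

Lemma sqn (p : R3) : sqnorm3 p = Defs.c1 p ^ 2 + Defs.c2 p ^ 2 + Defs.c3 p ^ 2.
Proof. destruct p as [[p1 p2] p3]; simpl; auto. Qed.

Theorem mainTheorem6 (a eps : R)
  (Heps : (Rabs a / sqrt 2 < eps < Rabs a) \/ (- Rabs a < eps < - (Rabs a / sqrt 2)))
  (um up : R -> R3)
  (Hum : is_solution (Xminus a eps) (Ppt a eps) um)
  (Hup : is_solution (Xplus a eps) (Ppt a eps) up) :
  (forall t : R, 0 < t < tminus a eps -> sqnorm3 (um t) < 1) /\
  (forall t : R, 0 < t < tplus a eps -> sqnorm3 (up t) > 1).
Proof.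
  assert (Hs2 : sqrt 2 > 0) by (apply sqrt_lt_R0; lra).
  assert (Hq : 0 <= Rabs a / sqrt 2) by (apply Rdiv_le_0_compat; [apply Rabs_pos|lra]).
  assert (Haeps : eps ^ 2 < a ^ 2).
  { rewrite <- (pow2_abs a). destruct Heps as [[h1 h2]|[h1 h2]]; nra. }
  assert (Ha : a <> 0).
  { intro e. subst. rewrite Rabs_R0 in *. destruct Heps; lra. }
  set (s := sqrt (a ^ 2 - eps ^ 2)).
  assert (Hs : 0 < s) by (apply sqrt_lt_R0; lra).
  assert (Hss : s ^ 2 = a ^ 2 - eps ^ 2).
  { unfold s. rewrite <- Rsqr_pow2. apply Rsqr_sqrt. lra. }
  destruct Hum as [Hm0 Hm]. destruct Hup as [Hp0 Hp].
  split.
  - intros t Ht. rewrite sqn.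
    apply (minus_case a eps s (fun t => Defs.c1 (um t)) (fun t => Defs.c2 (um t)) (fun t => Defs.c3 (um t))); auto.
    + intro r. destruct (Hm r) as [H1 _]. destruct (Xm_comp a eps (um r)) as [E _]. rewrite E in H1. exact H1.
    + intro r. destruct (Hm r) as [_ [H1 _]]. destruct (Xm_comp a eps (um r)) as [_ [E _]]. rewrite E in H1. exact H1.
    + intro r. destruct (Hm r) as [_ [_ H1]]. destruct (Xm_comp a eps (um r)) as [_ [_ E]]. rewrite E in H1. exact H1.
    + simpl. rewrite Hm0. reflexivity.
    + simpl. rewrite Hm0. reflexivity.
    + simpl. rewrite Hm0. reflexivity.
  - intros t Ht. rewrite sqn.
    apply (plus_case a eps s (fun t => Defs.c1 (up t)) (fun t => Defs.c2 (up t)) (fun t => Defs.c3 (up t))); auto.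
    + intro r. destruct (Hp r) as [H1 _]. destruct (Xp_comp a eps (up r)) as [E _]. rewrite E in H1. exact H1.
    + intro r. destruct (Hp r) as [_ [H1 _]]. destruct (Xp_comp a eps (up r)) as [_ [E _]]. rewrite E in H1. exact H1.
    + intro r. destruct (Hp r) as [_ [_ H1]]. destruct (Xp_comp a eps (up r)) as [_ [_ E]]. rewrite E in H1. exact H1.
    + simpl. rewrite Hp0. reflexivity.
    + simpl. rewrite Hp0. reflexivity.
    + simpl. rewrite Hp0. reflexivity.
Qed.
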